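(* On the classical Robba ring $\mathcal R(\mathbb Z_p,K)$ the nice topology coincides with the inductive limit topology.
   Context: $p$ is an odd prime, $K$ a complete discretely valued field with $\mathbb Q_p\subseteq K\subseteq\mathbb C_p$, $o_K$ its ring of integers. The classical Robba ring $\mathcal R(\mathbb Z_p,K)$ is the ring of Laurent series $\sum_{n\in\mathbb Z}a_nT^n$ ($a_n\in K$) converging on some annulus $r\le|T|<1$, i.e. with $|a_n|\rho^n\to0$ as $|n|\to\infty$ for all $\rho\in[r,1)$; here $T=\gamma-1$ for the generator $\gamma$ of $\mathbb Z_p$ (it is the case $G=\mathbb Z_p$, $d=1$, $b_1=T$ of the generalized Robba ring). For $r\le\rho<\rho'<1$ put $\|x\|_{\rho,\rho'}=\max(\sup_n|a_n|\rho^n,\sup_n|a_n|\rho'^n)$; $D_{[r,1)}(\mathbb Z_p,K)$ denotes the Fréchet space of series converging on $r\le|T|<1$ with the topology given by these norms, and the inductive limit topology on $\mathcal R(\mathbb Z_p,K)=\varinjlim_{r\to1}D_{[r,1)}(\mathbb Z_p,K)$ is the locally convex inductive limit topology. Nice topology: for $x_0=\sum_nc_{0,n}T^n$ let $L_{x_0}=\{\sum_nd_nT^n\in\mathcal R(\mathbb Z_p,K):|c_{0,-n}||d_n|\le1\ \forall n\}$; the nice topology is the locally convex topology in which an $o_K$-lattice is open iff it contains some $L_{x_0}$. *)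

(* Defs.v *)
From HB Require Import structures.
From mathcomp Require Import all_boot all_algebra.
From Stdlib Require Import Reals ZArith List.
Set Implicit Arguments. Unset Strict Implicit. Unset Printing Implicit Defensive.
Local Open Scope R_scope.

Definition nonarch_abs (K : fieldType) (abs : K -> R) : Prop :=
  (forall x, 0 <= abs x) /\
  (forall x, abs x = 0 <-> x = GRing.zero) /\
  (forall x y, abs (GRing.mul x y) = abs x * abs y) /\
  (forall x y, abs (GRing.add x y) <= Rmax (abs x) (abs y)).

Definition abs_complete (K : fieldType) (abs : K -> R) : Prop :=
  forall u : nat -> K,
    (forall eps, 0 < eps -> exists N : nat, forall m n : nat, (N <= m)%nat -> (N <= n)%nat ->
        abs (GRing.add (u m) (GRing.opp (u n))) < eps) ->
    exists l : K, forall eps, 0 < eps -> exists N : nat, forall n : nat, (N <= n)%nat ->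
        abs (GRing.add (u n) (GRing.opp l)) < eps.

Definition abs_discrete (K : fieldType) (abs : K -> R) : Prop :=
  exists pi : K, 0 < abs pi < 1 /\
    forall x : K, x <> GRing.zero -> exists k : Z, abs x = powerRZ (abs pi) k.

(* Q_p <= K <= C_p, K complete discretely valued: the absolute value extends
   the p-adic one (|p| = 1/p) and the residue field is algebraic over F_p
   (every residue class lies in some F_{p^n}). *)
Definition padic_cdvf (p : nat) (K : fieldType) (abs : K -> R) : Prop :=
  nonarch_abs abs /\ abs_complete abs /\ abs_discrete abs /\
  abs (GRing.natmul (GRing.one K) p) = / INR p /\
  (forall x : K, abs x <= 1 -> exists n : nat, (0 < n)%nat /\
      abs (GRing.add (GRing.exp x (p ^ n)) (GRing.opp x)) < 1).

(* ---------- Laurent series sum_n a_n T^n, a : Z -> K ---------- *)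

Definition ladd (K : fieldType) (a b : Z -> K) : Z -> K := fun n => GRing.add (a n) (b n).
Definition lsub (K : fieldType) (a b : Z -> K) : Z -> K :=
  fun n => GRing.add (a n) (GRing.opp (b n)).
Definition lscale (K : fieldType) (c : K) (a : Z -> K) : Z -> K := fun n => GRing.mul c (a n).
Definition lzero (K : fieldType) : Z -> K := fun _ => GRing.zero.

Definition D_int (K : fieldType) (abs : K -> R) (r : R) (a : Z -> K) : Prop :=
  forall rho, r <= rho < 1 -> forall eps, 0 < eps ->
    exists N : nat, forall n : Z, (Z.of_nat N <= Z.abs n)%Z ->
      abs (a n) * powerRZ rho n < eps.

Definition robba (K : fieldType) (abs : K -> R) (a : Z -> K) : Prop :=
  exists r, 0 < r < 1 /\ D_int abs r a.

Definition is_lattice (K : fieldType) (abs : K -> R) (L : (Z -> K) -> Prop) : Prop :=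
  (forall x, L x -> robba abs x) /\
  L (lzero K) /\
  (forall x y, L x -> L y -> L (ladd x y)) /\
  (forall c x, abs c <= 1 -> L x -> L (lscale c x)) /\
  (forall x, robba abs x -> exists c : K, c <> GRing.zero /\ L (lscale c x)).

Definition lc_open (K : fieldType) (abs : K -> R)
    (OL : ((Z -> K) -> Prop) -> Prop) (U : (Z -> K) -> Prop) : Prop :=
  (forall x, U x -> robba abs x) /\
  forall x, U x -> exists L, OL L /\ forall y, L y -> U (ladd x y).

Definition L_nice (K : fieldType) (abs : K -> R) (x0 : Z -> K) (d : Z -> K) : Prop :=
  robba abs d /\ forall n : Z, abs (x0 (- n)%Z) * abs (d n) <= 1.

Definition nice_open_lattice (K : fieldType) (abs : K -> R) (L : (Z -> K) -> Prop) : Prop :=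
  is_lattice abs L /\
  exists x0, robba abs x0 /\ forall d, L_nice abs x0 d -> L d.

Definition norm_le (K : fieldType) (abs : K -> R) (rho rho' eps : R) (b : Z -> K) : Prop :=
  forall n : Z, abs (b n) * powerRZ rho n <= eps /\ abs (b n) * powerRZ rho' n <= eps.

(* open subsets of the Frechet space D_[r,1)(Z_p,K), topology given by the
   family of norms ||.||_{rho,rho'}, r <= rho < rho' < 1 (finite intersections
   of balls form a basis at each point) *)
Definition frechet_open (K : fieldType) (abs : K -> R) (r : R) (U : (Z -> K) -> Prop) : Prop :=
  (forall x, U x -> D_int abs r x) /\
  forall x, U x -> exists (rhos : list (R * R)) (eps : R), 0 < eps /\
    (forall q, In q rhos -> r <= fst q /\ fst q < snd q /\ snd q < 1) /\
    forall y, D_int abs r y ->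
      (forall q, In q rhos -> norm_le abs (fst q) (snd q) eps (lsub y x)) -> U y.

Definition indlim_open_lattice (K : fieldType) (abs : K -> R) (L : (Z -> K) -> Prop) : Prop :=
  is_lattice abs L /\
  forall r, 0 < r < 1 -> frechet_open abs r (fun y => L y /\ D_int abs r y).

(* Main.v *)
Require Import Defs.
From HB Require Import structures.
From mathcomp Require Import all_boot all_algebra.
From Stdlib Require Import Reals ZArith List Lra Lia Classical ClassicalEpsilon FunctionalExtensionality.
Open Scope R_scope.

Set Implicit Arguments. Unset Strict Implicit.

Lemma abs0 (K : fieldType) (abs : K -> R) (ha : nonarch_abs abs) : abs GRing.zero = 0.
Proof. destruct ha as [_ [h _]]. apply h; reflexivity. Qed.

Lemma abs_nonneg (K : fieldType) (abs : K -> R) (ha : nonarch_abs abs) x : 0 <= abs x.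
Proof. destruct ha as [h _]. apply h. Qed.

Lemma abs_mul (K : fieldType) (abs : K -> R) (ha : nonarch_abs abs) x y :
  abs (GRing.mul x y) = abs x * abs y.
Proof. destruct ha as [_ [_ [h _]]]. apply h. Qed.

Lemma abs_add (K : fieldType) (abs : K -> R) (ha : nonarch_abs abs) x y :
  abs (GRing.add x y) <= Rmax (abs x) (abs y).
Proof. destruct ha as [_ [_ [_ h]]]. apply h. Qed.

Lemma abs_neq0 (K : fieldType) (abs : K -> R) (ha : nonarch_abs abs) x :
  x <> GRing.zero -> 0 < abs x.
Proof.
  intro hx. destruct ha as [h0 [h1 _]]. destruct (h0 x) as [h|h]; auto.
  exfalso. apply hx. apply h1. auto.
Qed.

Lemma abs1 (K : fieldType) (abs : K -> R) (ha : nonarch_abs abs) : abs (GRing.one K) = 1.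
Proof.
  have h := abs_mul ha (GRing.one K) (GRing.one K).
  rewrite GRing.mulr1 in h.
  have hp : 0 < abs (GRing.one K) by apply (abs_neq0 ha); apply/eqP; exact: (@GRing.oner_neq0 K).
  apply (Rmult_eq_reg_l (abs (GRing.one K))); lra.
Qed.

Lemma absN (K : fieldType) (abs : K -> R) (ha : nonarch_abs abs) x :
  abs (GRing.opp x) = abs x.
Proof.
  have h1 : abs (GRing.opp (GRing.one K)) = 1.
  { have h := abs_mul ha (GRing.opp (GRing.one K)) (GRing.opp (GRing.one K)).
    rewrite GRing.mulrNN GRing.mulr1 (abs1 ha) in h.
    have hp := abs_nonneg ha (GRing.opp (GRing.one K)). nra. }
  rewrite -GRing.mulN1r abs_mul // h1. lra.
Qed.

Lemma abs_sub (K : fieldType) (abs : K -> R) (ha : nonarch_abs abs) x y :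
  abs (GRing.add x (GRing.opp y)) <= Rmax (abs x) (abs y).
Proof. rewrite -(absN ha y). apply abs_add; auto. Qed.

Lemma abs_exp (K : fieldType) (abs : K -> R) (ha : nonarch_abs abs) x k :
  abs (GRing.exp x k) = abs x ^ k.
Proof.
  induction k as [|k IH]. simpl. apply abs1; auto.
  rewrite GRing.exprS abs_mul // IH. simpl. reflexivity.
Qed.

Lemma abs_inv (K : fieldType) (abs : K -> R) (ha : nonarch_abs abs) x :
  x <> GRing.zero -> abs (GRing.inv x) = / abs x.
Proof.
  intro hx. have hp := abs_neq0 ha hx.
  have h := abs_mul ha (GRing.inv x) x. rewrite GRing.mulVf in h.
  2:{ apply/eqP. exact hx. }
  rewrite abs1 // in h. field_simplify_eq. 2: lra. lra.
Qed.

Lemma pz_pos a n : 0 < a -> 0 < powerRZ a n.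
Proof. intro; apply powerRZ_lt; auto. Qed.

Lemma pz_mono_nonneg a b n : 0 < a <= b -> (0 <= n)%Z -> powerRZ a n <= powerRZ b n.
Proof.
  intros hab hn. destruct (Z_of_nat_complete n hn) as [k ->].
  rewrite -!pow_powerRZ. apply pow_incr. lra.
Qed.

Lemma pz_mono_nonpos a b n : 0 < a <= b -> (n <= 0)%Z -> powerRZ b n <= powerRZ a n.
Proof.
  intros hab hn. assert (h : (0 <= - n)%Z) by lia.
  destruct (Z_of_nat_complete _ h) as [k hk].
  replace n with (- Z.of_nat k)%Z by lia.
  rewrite !powerRZ_neg' -!pow_powerRZ. apply Rinv_le_contravar.
  apply pow_lt; lra. apply pow_incr; lra.
Qed.

Lemma pz_opp_mul a n : 0 < a -> powerRZ a (- n) * powerRZ a n = 1.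
Proof.
  intro h. rewrite -powerRZ_add. 2: lra. replace (- n + n)%Z with 0%Z by lia. reflexivity.
Qed.
Lemma D_int_zero (K : fieldType) (abs : K -> R) (ha : nonarch_abs abs) r :
  D_int abs r (lzero K).
Proof.
  intros rho hr eps he. exists 0%nat. intros n _. unfold lzero. rewrite abs0 //. lra.
Qed.

Lemma D_int_sub (K : fieldType) (abs : K -> R) (ha : nonarch_abs abs) r x y : 0 < r ->
  D_int abs r x -> D_int abs r y -> D_int abs r (lsub y x).
Proof.
  intros r0 hx hy rho hr eps he.
  destruct (hx rho hr eps he) as [N1 h1]. destruct (hy rho hr eps he) as [N2 h2].
  exists (Nat.max N1 N2). intros n hn. unfold lsub.
  have hp : 0 < powerRZ rho n by apply pz_pos; lra.
  have := abs_sub ha (y n) (x n).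
  have hm1 := Nat.le_max_l N1 N2. have hm2 := Nat.le_max_r N1 N2.
  have hn1 : (Z.of_nat N1 <= Z.abs n)%Z by (apply Z.le_trans with (Z.of_nat (Nat.max N1 N2)); [apply inj_le|]; assumption).
  have hn2 : (Z.of_nat N2 <= Z.abs n)%Z by (apply Z.le_trans with (Z.of_nat (Nat.max N1 N2)); [apply inj_le|]; assumption).
  have := h1 n hn1. have := h2 n hn2.
  intros a b c. have hx0 := abs_nonneg ha (x n). have hy0 := abs_nonneg ha (y n).
  apply Rle_lt_trans with (Rmax (abs (y n)) (abs (x n)) * powerRZ rho n).
  apply Rmult_le_compat_r; [lra|exact c].
  unfold Rmax; destruct Rle_dec; auto.
Qed.

Lemma D_int_mask (K : fieldType) (abs : K -> R) (ha : nonarch_abs abs) r d y :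
  D_int abs r d -> (forall n, y n = d n \/ y n = GRing.zero) -> D_int abs r y.
Proof.
  intros hd hy rho hr eps he. destruct (hd rho hr eps he) as [N h].
  exists N. intros n hn. destruct (hy n) as [e|e]; rewrite e; auto.
  rewrite abs0 //. lra.
Qed.

Fixpoint fsum (f : nat -> R) (N : nat) : R :=
  match N with O => 0 | S k => fsum f k + f k end.

Lemma fsum_nonneg (f : nat -> R) N : (forall k, 0 <= f k) -> 0 <= fsum f N.
Proof. intro hf. induction N; simpl. lra. have := hf N. lra. Qed.

Lemma fsum_ge (f : nat -> R) N : (forall k, 0 <= f k) -> forall k, (k < N)%coq_nat -> f k <= fsum f N.
Proof.
  intro hf. induction N as [|N IH]; intros k hk. lia. simpl.
  destruct (Nat.eq_dec k N) as [->|ne]. have := fsum_nonneg N hf. lra.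
  have := IH k ltac:(lia). have := hf N. lra.
Qed.

Lemma D_int_bound (K : fieldType) (abs : K -> R) (ha : nonarch_abs abs) r0 x0 rho :
  0 < r0 -> D_int abs r0 x0 -> r0 <= rho < 1 ->
  exists C, 0 < C /\ forall m, abs (x0 m) * powerRZ rho m <= C.
Proof.
  intros hr0 hx hrho. destruct (hx rho hrho 1 ltac:(lra)) as [N hN].
  set f := fun k : nat => abs (x0 (Z.of_nat k)) * powerRZ rho (Z.of_nat k)
     + abs (x0 (- Z.of_nat k)%Z) * powerRZ rho (- Z.of_nat k)%Z.
  have hf : forall k, 0 <= f k.
  { intro k. unfold f. have := abs_nonneg ha (x0 (Z.of_nat k)).
    have := abs_nonneg ha (x0 (- Z.of_nat k)%Z).
    have := pz_pos (Z.of_nat k) (ltac:(lra) : 0 < rho).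
    have := pz_pos (- Z.of_nat k)%Z (ltac:(lra) : 0 < rho). nra. }
  exists (1 + fsum f N). split. have := fsum_nonneg N hf. lra.
  intro m. destruct (Z_le_gt_dec (Z.of_nat N) (Z.abs m)) as [h|h].
  - have := hN m h. have := fsum_nonneg N hf. lra.
  - have hk : (Z.abs_nat m < N)%coq_nat by lia.
    have := fsum_ge hf hk. unfold f.
    have := abs_nonneg ha (x0 (Z.of_nat (Z.abs_nat m))).
    have := abs_nonneg ha (x0 (- Z.of_nat (Z.abs_nat m))%Z).
    have := pz_pos (Z.of_nat (Z.abs_nat m)) (ltac:(lra) : 0 < rho).
    have := pz_pos (- Z.of_nat (Z.abs_nat m))%Z (ltac:(lra) : 0 < rho).
    destruct (Z_le_gt_dec 0 m) as [hm|hm].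
    + replace (Z.of_nat (Z.abs_nat m)) with m by lia. nra.
    + replace (- Z.of_nat (Z.abs_nat m))%Z with m by lia. nra.
Qed.

Lemma prod_bound A B P Q C : 0 <= A -> 0 <= B -> 0 < C -> P * Q = 1 ->
  A * P <= C -> B * Q <= / C -> 0 < P -> 0 < Q -> A * B <= 1.
Proof.
  intros hA hB hC hPQ h1 h2 hP hQ.
  replace (A * B) with ((A * P) * (B * Q)) by (rewrite -(Rmult_1_r (A * B)) -hPQ; ring).
  replace 1 with (C * / C) by (field; lra).
  apply Rmult_le_compat; auto; nra.
Qed.

Lemma nice_to_indlim (K : fieldType) (abs : K -> R) (ha : nonarch_abs abs) L :
  nice_open_lattice abs L -> indlim_open_lattice abs L.
Proof.
  intros [hL [x0 [[r0 [hr0 hx0]] hsub]]]. split; auto.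
  intros r hr. split. { intros x [_ h]; exact h. }
  intros x [hLx hDx].
  set rho := Rmax r r0.
  have hrho : r0 <= rho < 1 by unfold rho, Rmax; destruct (Rle_dec r r0); lra.
  have hrr : r <= rho by unfold rho, Rmax; destruct (Rle_dec r r0); lra.
  destruct (D_int_bound ha (proj1 hr0) hx0 hrho) as [C [hC hb]].
  exists ((rho, (rho + 1) / 2) :: nil), (/ C). split. apply Rinv_0_lt_compat; lra.
  split. { intros q [<-|[]]. simpl. lra. }
  intros y hy hn. split; auto.
  have hz : L (lsub y x).
  { apply hsub. split. exists r. split. lra. apply D_int_sub; auto; lra.
    intro n. have [h1 _] := hn _ (or_introl (erefl _)) n. simpl in h1.
    have := hb (- n)%Z. have := pz_opp_mul n (ltac:(lra) : 0 < rho).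
    have := pz_pos n (ltac:(lra) : 0 < rho). have := pz_pos (- n)%Z (ltac:(lra) : 0 < rho).
    have := abs_nonneg ha (x0 (- n)%Z). have := abs_nonneg ha (lsub y x n).
    intros a1 a2 a3 a4 a5 a6.
    apply (prod_bound a2 a1 hC a5 a6 h1 a3 a4). }
  have hadd := proj1 (proj2 (proj2 hL)) _ _ hLx hz.
  replace y with (ladd x (lsub y x)); auto.
  apply functional_extensionality. intro n. unfold ladd, lsub.
  rewrite GRing.addrC GRing.subrK. reflexivity.
Qed.

Lemma bernoulli x n : 0 <= x <= 1 -> 1 - INR n * x <= (1 - x) ^ n.
Proof.
  intro hx. induction n as [|n IH]. simpl. lra.
  rewrite S_INR. simpl. have h : 0 <= 1 - x by lra.
  have := Rmult_le_compat_l _ _ _ h IH. have := pos_INR n. nra.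
Qed.

Lemma pow_le1 x n : 0 <= x <= 1 -> x ^ n <= 1.
Proof. intro h. rewrite -(pow1 n). apply pow_incr. lra. Qed.

Lemma pow_decr x a b : 0 <= x <= 1 -> (a <= b)%coq_nat -> x ^ b <= x ^ a.
Proof.
  intros hx hab. replace b with (Nat.add a (Nat.sub b a)) by lia. rewrite pow_add.
  have h1 := pow_le1 (Nat.sub b a) hx. have h2 := pow_le x a (proj1 hx). nra.
Qed.

Definition rl (q : R) (j : nat) : R := 1 - (1 - q) / (INR j + 2).

Lemma rl_bounds q j : 0 < q < 1 -> q <= rl q j < 1.
Proof.
  intro hq. unfold rl. have := pos_INR j. intro h.
  have h2 : 0 < (1 - q) / (INR j + 2) by apply Rdiv_lt_0_compat; lra.
  split; [|lra].
  have : (1 - q) / (INR j + 2) <= 1 - q.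
  { unfold Rdiv. rewrite -{2}(Rmult_1_r (1 - q)). apply Rmult_le_compat_l. lra.
    rewrite -Rinv_1. apply Rinv_le_contravar; lra. }
  lra.
Qed.

Lemma rl_pow q j : 0 < q < 1 -> q <= rl q j ^ (S j).
Proof.
  intro hq. unfold rl. have := pos_INR j. intro h.
  have hx : 0 <= (1 - q) / (INR j + 2) <= 1.
  { split. apply Rlt_le, Rdiv_lt_0_compat; lra.
    apply (Rmult_le_reg_r (INR j + 2)). lra. field_simplify; lra. }
  have := bernoulli (S j) hx. rewrite S_INR.
  have : (INR j + 1) * ((1 - q) / (INR j + 2)) <= 1 - q.
  { apply (Rmult_le_reg_r (INR j + 2)). lra. field_simplify; nra. }
  lra.
Qed.

Lemma rl_cofinal q r : 0 < q < 1 -> r < 1 -> exists j, r <= rl q j.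
Proof.
  intros hq hr. destruct (INR_archimed (1 - r) (1 - q) ltac:(lra)) as [n hn].
  exists n. unfold rl. have := pos_INR n. intro h.
  have : (1 - q) / (INR n + 2) <= 1 - r.
  { apply (Rmult_le_reg_r (INR n + 2)). lra. field_simplify; nra. }
  lra.
Qed.

Lemma list_max r (rhos : list (R * R)) : r < 1 ->
  (forall q, In q rhos -> r <= fst q /\ fst q < snd q /\ snd q < 1) ->
  exists s, r <= s < 1 /\ forall q, In q rhos -> snd q <= s.
Proof.
  intro hr. induction rhos as [|a l IH]; intro h.
  - exists r. split. lra. intros q [].
  - destruct IH as [s [hs hl]]. { intros q hq. apply h. right. exact hq. }
    have ha := h a (or_introl (erefl _)).
    exists (Rmax s (snd a)). split. unfold Rmax; destruct Rle_dec; lra.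
    intros q [<-|hq]. apply Rmax_r. apply Rle_trans with s. auto. apply Rmax_l.
Qed.

Lemma pz_between r rho s n : 0 < r <= rho -> rho <= s ->
  powerRZ rho n <= Rmax (powerRZ r n) (powerRZ s n).
Proof.
  intros h1 h2. destruct (Z_le_gt_dec 0 n) as [hn|hn].
  - apply Rle_trans with (powerRZ s n). apply pz_mono_nonneg; auto; lra. apply Rmax_r.
  - apply Rle_trans with (powerRZ r n). apply pz_mono_nonpos; auto; lia. apply Rmax_l.
Qed.

Lemma ball_of_frechet (K : fieldType) (abs : K -> R) (ha : nonarch_abs abs) L r :
  0 < r < 1 -> L (lzero K) -> frechet_open abs r (fun y => L y /\ D_int abs r y) ->
  exists e s, 0 < e /\ r <= s < 1 /\ forall y, D_int abs r y ->
    (forall n, abs (y n) * powerRZ r n <= e /\ abs (y n) * powerRZ s n <= e) -> L y.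
Proof.
  intros hr h0 [_ hf]. destruct (hf (lzero K) (conj h0 (D_int_zero (r:=r) ha))) as [rhos [e [he [hq hy]]]].
  destruct (list_max (proj2 hr) hq) as [s [hs hsq]].
  exists e, s. split; auto. split; auto. intros y hD hb.
  apply (hy y hD). intros q hin n.
  have hy0 : abs (lsub y (lzero K) n) = abs (y n).
  { unfold lsub, lzero. rewrite GRing.oppr0 GRing.addr0. reflexivity. }
  rewrite hy0. have [h1 [h2 h3]] := hq q hin. have h4 := hsq q hin.
  have [b1 b2] := hb n. have ay := abs_nonneg ha (y n).
  have hm : forall t, Rmax (abs (y n) * powerRZ r n) (abs (y n) * powerRZ s n) <= e ->
      r <= t <= s -> abs (y n) * powerRZ t n <= e.
  { intros t hm ht. apply Rle_trans with (abs (y n) * Rmax (powerRZ r n) (powerRZ s n)).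
    apply Rmult_le_compat_l; auto. apply pz_between; lra.
    unfold Rmax in *. destruct Rle_dec; destruct Rle_dec; auto; nra. }
  have hmx : Rmax (abs (y n) * powerRZ r n) (abs (y n) * powerRZ s n) <= e
    by (unfold Rmax; destruct Rle_dec; auto).
  split; apply hm; auto; lra.
Qed.

Lemma nat_div_facts k l : (0 < l)%coq_nat ->
  (Nat.mul l (Nat.div k l) <= k)%coq_nat /\ (k < Nat.mul l (S (Nat.div k l)))%coq_nat.
Proof.
  intro hl. have h1 := Nat.div_mod_eq k l. have h2 := Nat.mod_upper_bound k l ltac:(lia).
  split; nia.
Qed.

Lemma X1_real q s0 e0 A0 l k : 0 < q < 1 -> 0 < s0 < 1 -> s0 ^ l <= q -> q ^ A0 <= e0 ->
  (0 < l)%coq_nat -> s0 ^ k <= (/ q) ^ A0 * q ^ (Nat.div k l) * e0.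
Proof.
  intros hq hs hsl hA hl. destruct (nat_div_facts k hl) as [h1 _].
  have hqa : 0 < q ^ A0 by apply pow_lt; lra.
  have hi : 1 <= (/ q) ^ A0 * e0.
  { rewrite pow_inv. apply (Rmult_le_reg_l (q ^ A0)); auto. field_simplify; lra. }
  apply Rle_trans with (q ^ Nat.div k l).
  - apply Rle_trans with (s0 ^ (Nat.mul l (Nat.div k l))). apply pow_decr; auto; lra.
    rewrite pow_mult. apply pow_incr. split; auto. apply pow_le; lra.
  - have := pow_lt q (Nat.div k l) ltac:(lra). nra.
Qed.

Lemma X2_real q e r A m j : 0 < q < 1 -> 0 < r < 1 -> q <= r ^ (S j) -> q ^ A <= e ->
  / r ^ m <= (/ q) ^ (Nat.add (Nat.add A (Nat.div m (S j))) 1) * e.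
Proof.
  intros hq hr hrj hA.
  set c := Nat.add (Nat.div m (S j)) 1.
  have hc : (m <= Nat.mul (S j) c)%coq_nat.
  { destruct (nat_div_facts m (ltac:(lia) : (0 < S j)%coq_nat)) as [_ h]. unfold c. lia. }
  have h1 : q ^ c <= r ^ m.
  { apply Rle_trans with ((r ^ S j) ^ c). apply pow_incr; split; lra.
    rewrite -pow_mult. apply pow_decr; auto; lra. }
  replace (Nat.add (Nat.add A (Nat.div m (S j))) 1) with (Nat.add A c) by (unfold c; lia).
  rewrite pow_add !pow_inv.
  have hqa : 0 < q ^ A by apply pow_lt; lra.
  have hqc : 0 < q ^ c by apply pow_lt; lra.
  have hrm : 0 < r ^ m by apply pow_lt; lra.
  apply Rle_trans with (/ q ^ c * / q ^ A * e).
  - apply (Rmult_le_reg_l (r ^ m * q ^ c * q ^ A)). apply Rmult_lt_0_compat; [apply Rmult_lt_0_compat|]; auto.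
    field_simplify; try lra. apply Rmult_le_compat; lra.
  - right. ring.
Qed.

Definition term (A : nat -> nat) (m j : nat) : nat := Nat.add (Nat.add (A j) (Nat.div m (S j))) 1.
Fixpoint Gmin (A : nat -> nat) (m k : nat) : nat :=
  match k with O => term A m O | S k' => Nat.min (Gmin A m k') (term A m (S k')) end.

Lemma Gmin_le A m k j : (j <= k)%coq_nat -> (Gmin A m k <= term A m j)%coq_nat.
Proof.
  induction k as [|k IH]; intro h; simpl.
  - replace j with O by lia. lia.
  - destruct (Nat.eq_dec j (S k)) as [->|ne]. lia. have := IH ltac:(lia). lia.
Qed.

Lemma Gmin_wit A m k : exists j, Gmin A m k = term A m j.
Proof.
  induction k as [|k [j IH]]; simpl. exists O; auto.
  destruct (Nat.le_ge_cases (Gmin A m k) (term A m (S k))).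
  - exists j. rewrite -IH. lia.
  - exists (S k). lia.
Qed.

Lemma X3pos q (A : nat -> nat) rho eps : 0 < q < 1 -> 0 < rho < 1 -> 0 < eps ->
  exists N, forall m, (N <= m)%coq_nat -> (/ q) ^ (Gmin A m m) * rho ^ m < eps.
Proof.
  intros hq hr he.
  destruct (pow_lt_1_zero rho ltac:(rewrite Rabs_pos_eq; lra) q ltac:(lra)) as [j hj].
  have hrj : rho ^ S j < q.
  { have := hj (S j) ltac:(lia). rewrite Rabs_pos_eq. auto. apply pow_le; lra. }
  have hrj0 : 0 < rho ^ S j by apply pow_lt; lra.
  set c := rho ^ S j * / q.
  have hc : 0 <= c < 1.
  { unfold c. split. apply Rmult_le_pos; try lra. apply Rlt_le, Rinv_0_lt_compat; lra.
    apply (Rmult_lt_reg_r q). lra. field_simplify; lra. }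
  have hqa : 0 < q ^ (Nat.add (A j) 1) by apply pow_lt; lra.
  destruct (pow_lt_1_zero c ltac:(rewrite Rabs_pos_eq; lra) (eps * q ^ (Nat.add (A j) 1))
     ltac:(apply Rmult_lt_0_compat; lra)) as [a0 ha0].
  exists (Nat.add j (Nat.mul (S j) a0)). intros m hm.
  set a := Nat.div m (S j).
  have haa : (a0 <= a)%coq_nat.
  { apply Nat.div_le_lower_bound. lia. lia. }
  have hG := Gmin_le A m (j:=j) (ltac:(lia) : (j <= m)%coq_nat).
  have hqi : 1 <= / q by (rewrite -Rinv_1; apply Rinv_le_contravar; lra).
  have e1 : (/ q) ^ (Gmin A m m) <= (/ q) ^ (Nat.add (A j) 1) * (/ q) ^ a.
  { rewrite -pow_add. apply Rle_pow; auto. unfold term in hG. unfold a. lia. }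
  have e2 : rho ^ m <= (rho ^ S j) ^ a.
  { rewrite -pow_mult. apply pow_decr. lra. destruct (nat_div_facts m (ltac:(lia) : (0 < S j)%coq_nat)). unfold a. lia. }
  have e3 : Rabs (c ^ a) < eps * q ^ (Nat.add (A j) 1) by apply ha0; lia.
  rewrite Rabs_pos_eq in e3. 2: apply pow_le; lra.
  have p1 : 0 < (/ q) ^ Gmin A m m by apply pow_lt, Rinv_0_lt_compat; lra.
  have p2 : 0 < (/ q) ^ a by apply pow_lt, Rinv_0_lt_compat; lra.
  have p3 : 0 < (/ q) ^ (Nat.add (A j) 1) by apply pow_lt, Rinv_0_lt_compat; lra.
  have p4 : 0 <= rho ^ m by apply pow_le; lra.
  apply Rle_lt_trans with ((/ q) ^ (Nat.add (A j) 1) * ((/ q) ^ a * (rho ^ S j) ^ a)).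
  { rewrite -Rmult_assoc. apply Rmult_le_compat; try lra. }
  rewrite -Rpow_mult_distr Rmult_comm. fold c.
  replace eps with ((eps * q ^ (Nat.add (A j) 1)) * (/ q) ^ (Nat.add (A j) 1)).
  2:{ rewrite pow_inv. field. lra. }
  apply Rmult_lt_compat_r; auto. unfold c in e3. rewrite Rmult_comm. exact e3.
Qed.

Definition Rl (q : R) (l : nat) : R := 1 - (1 - q) / (2 * INR l).

Lemma Rl_facts q l : 0 < q < 1 -> (0 < l)%coq_nat -> 0 < Rl q l < 1 /\ q < Rl q l ^ l.
Proof.
  intros hq hl. have hL : 1 <= INR l by (apply (le_INR 1); lia).
  unfold Rl. have hx : 0 <= (1 - q) / (2 * INR l) <= 1.
  { split. apply Rlt_le, Rdiv_lt_0_compat; lra.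
    apply (Rmult_le_reg_r (2 * INR l)). lra. field_simplify; lra. }
  have hpos : 0 < (1 - q) / (2 * INR l) by (apply Rdiv_lt_0_compat; lra).
  split. split; try lra.
  have : (1 - q) / (2 * INR l) <= (1 - q) / 2.
  { apply (Rmult_le_reg_r (2 * INR l)). lra. field_simplify; nra. } lra.
  have := bernoulli l hx.
  have : INR l * ((1 - q) / (2 * INR l)) = (1 - q) / 2 by (field; lra).
  lra.
Qed.

Lemma X3neg q A0 l rho eps : 0 < q < 1 -> (0 < l)%coq_nat -> Rl q l <= rho < 1 -> 0 < eps ->
  exists N, forall k, (N <= k)%coq_nat -> (/ q) ^ A0 * q ^ (Nat.div k l) * / rho ^ k < eps.
Proof.
  intros hq hl hr he. destruct (Rl_facts hq hl) as [[hR0 hR1] hRl].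
  set R0 := Rl q l in hR0 hR1 hRl hr *.
  have hRl0 : 0 < R0 ^ l by apply pow_lt; lra.
  set c := q * / R0 ^ l.
  have hc : 0 <= c < 1.
  { unfold c. split. apply Rmult_le_pos; try lra. apply Rlt_le, Rinv_0_lt_compat; lra.
    apply (Rmult_lt_reg_r (R0 ^ l)). lra. field_simplify; lra. }
  have hqa : 0 < q ^ A0 by apply pow_lt; lra.
  destruct (pow_lt_1_zero c ltac:(rewrite Rabs_pos_eq; lra) (eps * q ^ A0 * R0 ^ l)
     ltac:(apply Rmult_lt_0_compat; [apply Rmult_lt_0_compat|]; lra)) as [b0 hb0].
  exists (Nat.mul l b0). intros k hk.
  set b := Nat.div k l.
  have hbb : (b0 <= b)%coq_nat by (apply Nat.div_le_lower_bound; lia).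
  destruct (nat_div_facts k hl) as [_ hk2]. fold b in hk2.
  have e1 : (R0 ^ l) ^ (S b) <= rho ^ k.
  { rewrite -pow_mult. apply Rle_trans with (R0 ^ k). apply pow_decr. lra. lia.
    apply pow_incr. lra. }
  have e3 : Rabs (c ^ b) < eps * q ^ A0 * R0 ^ l by apply hb0; lia.
  rewrite Rabs_pos_eq in e3. 2: apply pow_le; lra.
  have p1 : 0 < (R0 ^ l) ^ S b by apply pow_lt; lra.
  have p2 : 0 < q ^ b by apply pow_lt; lra.
  have p3 : 0 < (/ q) ^ A0 by apply pow_lt, Rinv_0_lt_compat; lra.
  apply Rle_lt_trans with ((/ q) ^ A0 * q ^ b * / (R0 ^ l) ^ S b).
  { apply Rmult_le_compat_l. nra. apply Rinv_le_contravar; auto. }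
  replace ((/ q) ^ A0 * q ^ b * / (R0 ^ l) ^ S b) with ((/ q) ^ A0 * / R0 ^ l * c ^ b).
  2:{ unfold c. rewrite Rpow_mult_distr !pow_inv. simpl. have nz1 : (R0 ^ l <> 0) by lra. have nz2 : ((R0 ^ l) ^ b <> 0) by (apply pow_nonzero; lra). have nz3 : (q ^ A0 <> 0) by lra. field. auto. }
  replace eps with ((/ q) ^ A0 * / R0 ^ l * (eps * q ^ A0 * R0 ^ l)).
  2:{ rewrite pow_inv. field. split; lra. }
  apply Rmult_lt_compat_l; auto. apply Rmult_lt_0_compat; auto. apply Rinv_0_lt_compat; lra.
Qed.

Lemma bnd a P X e : 0 <= a -> 0 <= X -> 0 <= e -> P <= X * e -> X * a <= 1 -> a * P <= e.
Proof. intros h1 h2 h3 h4 h5. apply Rle_trans with (a * (X * e)). apply Rmult_le_compat_l; auto.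
  replace (a * (X * e)) with ((X * a) * e) by ring. rewrite -{2}(Rmult_1_l e).
  apply Rmult_le_compat_r; auto. Qed.

Lemma decomp (K : fieldType) (abs : K -> R) (ha : nonarch_abs abs) L (hL : is_lattice abs L)
  (x0 : Z -> K) (lev e s : nat -> R) :
  (forall j, 0 < lev j < 1) -> (forall j, lev j <= s j < 1) -> (forall j, 0 < e j) ->
  (forall j y, D_int abs (lev j) y ->
     (forall n, abs (y n) * powerRZ (lev j) n <= e j /\ abs (y n) * powerRZ (s j) n <= e j) -> L y) ->
  (forall r, r < 1 -> exists j, r <= lev j) ->
  (forall n, (0 <= n)%Z -> powerRZ (s O) n <= abs (x0 (- n)%Z) * e O) ->
  (forall m, (0 < m)%Z -> exists j, powerRZ (lev j) (- m) <= abs (x0 m) * e j) ->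
  forall d, L_nice abs x0 d -> L d.
Proof.
  intros hlev hs he hball cof hX1 hX2 d [[r [hr hd]] hb].
  have hL0 : L (lzero K) by apply hL.
  have hLadd : forall x y, L x -> L y -> L (ladd x y) by apply hL.
  destruct (cof r (proj2 hr)) as [k hk].
  have hdk : D_int abs (lev k) d.
  { intros rho hrho. apply hd. lra. }
  have hlk := hlev k.
  destruct (hdk (lev k) ltac:(lra) (e k) (he k)) as [N hN].
  set P := fun n => if Z.leb 0 n then d n else GRing.zero.
  set Tl := fun n => if Z.leb n (- Z.of_nat (S N)) then d n else GRing.zero.
  set mono := fun m n => if Z.eqb n (- m) then d n else GRing.zero.
  set Hd := fun (M : nat) n => if (Z.ltb (- Z.of_nat M) n && Z.ltb n 0)%bool then d n else GRing.zero.
  have LP : L P.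
  { apply (hball O).
    - intros rho hrho eps heps. have hl0 := hlev O.
      destruct (Rle_dec r rho) as [hrr|hrr].
      + destruct (hd rho ltac:(lra) eps heps) as [N0 h0]. exists N0. intros n hn. unfold P.
        destruct (Z.leb_spec 0 n). auto. rewrite abs0 //. lra.
      + destruct (hd r ltac:(lra) eps heps) as [N0 h0]. exists N0. intros n hn. unfold P.
        destruct (Z.leb_spec 0 n). 2:{ rewrite abs0 //. lra. }
        apply Rle_lt_trans with (abs (d n) * powerRZ r n); auto.
        apply Rmult_le_compat_l. apply abs_nonneg; auto. apply pz_mono_nonneg; auto; lra.
    - intro n. unfold P. destruct (Z.leb_spec 0 n) as [hn|hn].
      + have h1 := hX1 n hn. have h2 := hb n. have hs0 := hs O. have hl0 := hlev O.
        have ha1 := abs_nonneg ha (d n). have ha2 := abs_nonneg ha (x0 (- n)%Z).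
        have hee := he O.
        have h3 : abs (d n) * powerRZ (s O) n <= e O.
        { apply (bnd ha1 ha2); auto; lra. }
        split; auto. apply Rle_trans with (abs (d n) * powerRZ (s O) n); auto.
        apply Rmult_le_compat_l; auto. apply pz_mono_nonneg; auto; lra.
      + rewrite abs0 //. have := he O. split; lra. }
  have LT : L Tl.
  { apply (hball k).
    - apply (D_int_mask ha hdk). intro n. unfold Tl. destruct (Z.leb_spec n (- Z.of_nat (S N))); auto.
    - intro n. unfold Tl. destruct (Z.leb_spec n (- Z.of_nat (S N))) as [hn|hn].
      + have h1 := hN n ltac:(lia). have hsk := hs k.
        have h2 : powerRZ (s k) n <= powerRZ (lev k) n by (apply pz_mono_nonpos; lra || lia).
        have := abs_nonneg ha (d n). intro h3. split. lra.
        apply Rle_trans with (abs (d n) * powerRZ (lev k) n). apply Rmult_le_compat_l; auto. lra.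
      + rewrite abs0 //. have := he k. split; lra. }
  have LM : forall m, (0 < m)%Z -> L (mono m).
  { intros m hm. destruct (hX2 m hm) as [j hj]. apply (hball j).
    - intros rho hrho eps heps. exists (S (Z.to_nat m)). intros n hn. unfold mono.
      destruct (Z.eqb_spec n (- m)). lia. rewrite abs0 //. lra.
    - intro n. unfold mono. destruct (Z.eqb_spec n (- m)) as [->|hn].
      + have h2 := hb (- m)%Z. rewrite Z.opp_involutive in h2.
        have hsj := hs j. have hlj := hlev j.
        have ha1 := abs_nonneg ha (d (- m)%Z). have ha2 := abs_nonneg ha (x0 m).
        have hee := he j.
        have h3 : abs (d (- m)%Z) * powerRZ (lev j) (- m) <= e j.
        { apply (bnd ha1 ha2); auto; lra. }
        split; auto. apply Rle_trans with (abs (d (- m)%Z) * powerRZ (lev j) (- m)); auto.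
        apply Rmult_le_compat_l; auto. apply pz_mono_nonpos; lra || lia.
      + rewrite abs0 //. have := he j. split; lra. }
  have LH : forall M, L (Hd M).
  { induction M as [|M IH].
    - replace (Hd O) with (lzero K); auto. apply functional_extensionality. intro n.
      unfold Hd, lzero. destruct (Z.ltb_spec (- Z.of_nat 0) n); destruct (Z.ltb_spec n 0); simpl; auto; lia.
    - destruct M as [|M].
      + replace (Hd 1%nat) with (Hd O); auto. apply functional_extensionality. intro n.
        unfold Hd. destruct (Z.ltb_spec (- Z.of_nat 0) n); destruct (Z.ltb_spec n 0);
        destruct (Z.ltb_spec (- Z.of_nat 1) n); simpl; auto; lia.
      + replace (Hd (S (S M))) with (ladd (Hd (S M)) (mono (Z.of_nat (S M)))).
        apply hLadd; auto. apply LM. lia.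
        apply functional_extensionality. intro n. unfold ladd, Hd, mono.
        destruct (Z.eqb_spec n (- Z.of_nat (S M))) as [he1|he1];
        destruct (Z.ltb_spec (- Z.of_nat (S M)) n); destruct (Z.ltb_spec n 0);
        destruct (Z.ltb_spec (- Z.of_nat (S (S M))) n); simpl;
        rewrite ?GRing.addr0 ?GRing.add0r; auto; lia. }
  replace d with (ladd (ladd P Tl) (Hd (S N))).
  apply hLadd; auto.
  apply functional_extensionality. intro n. unfold ladd, P, Tl, Hd.
  destruct (Z.leb_spec 0 n); destruct (Z.leb_spec n (- Z.of_nat (S N)));
  destruct (Z.ltb_spec (- Z.of_nat (S N)) n); destruct (Z.ltb_spec n 0); simpl;
  rewrite ?GRing.addr0 ?GRing.add0r; auto; lia.
Qed.

Lemma abs_pinv_exp (K : fieldType) (abs : K -> R) (ha : nonarch_abs abs) (pi : K) n :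
  0 < abs pi -> abs (GRing.exp (GRing.inv pi) n) = (/ abs pi) ^ n.
Proof.
  intro h. have hpi : pi <> GRing.zero by (intro e; rewrite e (abs0 ha) in h; lra).
  rewrite abs_exp // abs_inv //.
Qed.

Lemma indlim_to_nice (K : fieldType) (abs : K -> R) (ha : nonarch_abs abs) (pi : K)
  (hpi : 0 < abs pi < 1) L : indlim_open_lattice abs L -> nice_open_lattice abs L.
Proof.
  intros [hL hop]. split; auto.
  set q := abs pi.
  have hq : 0 < q < 1 by exact hpi.
  have hL0 : L (lzero K) by apply hL.
  have hball : forall j, exists es : R * R, 0 < fst es /\ rl q j <= snd es < 1 /\
     forall y, D_int abs (rl q j) y ->
     (forall n, abs (y n) * powerRZ (rl q j) n <= fst es /\ abs (y n) * powerRZ (snd es) n <= fst es) -> L y.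
  { intro j. have [h1 h2] := rl_bounds j hq.
    have hr : 0 < rl q j < 1 by lra.
    destruct (ball_of_frechet ha hr hL0 (hop _ hr)) as [e [s [he [hs hy]]]].
    exists (e, s). simpl. auto. }
  set E := fun j => proj1_sig (constructive_indefinite_description _ (hball j)).
  have hE : forall j, 0 < fst (E j) /\ rl q j <= snd (E j) < 1 /\
     forall y, D_int abs (rl q j) y ->
     (forall n, abs (y n) * powerRZ (rl q j) n <= fst (E j) /\ abs (y n) * powerRZ (snd (E j)) n <= fst (E j)) -> L y.
  { intro j. exact (proj2_sig (constructive_indefinite_description _ (hball j))). }
  set e := fun j => fst (E j). set s := fun j => snd (E j).
  have hA : forall j, exists a, q ^ a <= e j.
  { intro j. destruct (pow_lt_1_zero q ltac:(rewrite Rabs_pos_eq; lra) (e j) (proj1 (hE j))) as [N hN].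
    exists N. have := hN N (le_n N). rewrite Rabs_pos_eq. lra. apply pow_le; lra. }
  set Af := fun j => proj1_sig (constructive_indefinite_description _ (hA j)).
  have hAf : forall j, q ^ (Af j) <= e j.
  { intro j. exact (proj2_sig (constructive_indefinite_description _ (hA j))). }
  have hs0 : 0 < s O < 1.
  { have [_ [h _]] := hE O. have := rl_bounds O hq. unfold s. lra. }
  have hl : exists l, (0 < l)%coq_nat /\ s O ^ l <= q.
  { destruct (pow_lt_1_zero (s O) ltac:(rewrite Rabs_pos_eq; lra) q ltac:(lra)) as [N hN].
    exists (S N). split. lia. have := hN (S N) ltac:(lia). rewrite Rabs_pos_eq. lra. apply pow_le; lra. }
  destruct hl as [l [hl hsl]].
  set A0 := Af O.
  set x0 := fun n : Z => if Z.leb n 0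
    then GRing.mul (GRing.exp (GRing.inv pi) A0) (GRing.exp pi (Nat.div (Z.to_nat (- n)) l))
    else GRing.exp (GRing.inv pi) (Gmin Af (Z.to_nat n) (Z.to_nat n)).
  have ax_neg : forall k : nat, abs (x0 (- Z.of_nat k)%Z) = (/ q) ^ A0 * q ^ (Nat.div k l).
  { intro k. unfold x0. destruct (Z.leb_spec (- Z.of_nat k) 0). 2: lia.
    rewrite (abs_mul ha) (abs_pinv_exp ha); [|lra]. rewrite (abs_exp ha) Z.opp_involutive Nat2Z.id. reflexivity. }
  have ax_pos : forall m : nat, (0 < m)%coq_nat -> abs (x0 (Z.of_nat m)) = (/ q) ^ (Gmin Af m m).
  { intros m hm. unfold x0. destruct (Z.leb_spec (Z.of_nat m) 0). lia.
    rewrite (abs_pinv_exp ha); [|lra]. rewrite Nat2Z.id. reflexivity. }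
  exists x0. split.
  -
    destruct (Rl_facts hq hl) as [hR hRl]. exists (Rl q l). split; auto.
    intros rho hrho eps heps.
    destruct (X3pos Af hq (ltac:(lra) : 0 < rho < 1) heps) as [N1 h1].
    destruct (X3neg A0 hq hl hrho heps) as [N2 h2].
    exists (S (Nat.max N1 N2)). intros n hn.
    have hm1 := Nat.le_max_l N1 N2. have hm2 := Nat.le_max_r N1 N2.
    destruct (Z_le_gt_dec n 0) as [hn0|hn0].
    + have hk : n = (- Z.of_nat (Z.to_nat (- n)))%Z by lia.
      rewrite hk ax_neg powerRZ_neg' -pow_powerRZ. apply h2.
      have : (Z.of_nat (S (Nat.max N1 N2)) <= Z.of_nat (Z.to_nat (- n)))%Z by lia. lia.
    + have hk : n = Z.of_nat (Z.to_nat n) by lia.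
      rewrite hk ax_pos. 2: lia. rewrite -pow_powerRZ. apply h1.
      have : (Z.of_nat (S (Nat.max N1 N2)) <= Z.of_nat (Z.to_nat n))%Z by lia. lia.
  - apply (decomp ha hL (lev := rl q) (e := e) (s := s)).
    + intro j. have := rl_bounds j hq. lra.
    + intro j. have [_ [h _]] := hE j. exact h.
    + intro j. exact (proj1 (hE j)).
    + intro j. exact (proj2 (proj2 (hE j))).
    + intros r hr. apply rl_cofinal; auto.
    + intros n hn. have hk : n = Z.of_nat (Z.to_nat n) by lia.
      rewrite {2}hk ax_neg hk -pow_powerRZ Nat2Z.id.
      apply X1_real; auto. apply hAf.
    + intros m hm. have hk : m = Z.of_nat (Z.to_nat m) by lia.
      destruct (Gmin_wit Af (Z.to_nat m) (Z.to_nat m)) as [j hj].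
      exists j. rewrite {2}hk ax_pos. 2: lia. rewrite hj hk powerRZ_neg' -pow_powerRZ.
      unfold term. rewrite !Nat2Z.id. apply X2_real; auto.
      have := rl_bounds j hq. lra. apply rl_pow; auto.
Qed.

Unset Implicit Arguments.
Close Scope R_scope.

Theorem proposition5p13 (p : nat) (K : fieldType) (abs : K -> R)
  (hp : prime p) (hodd : odd p) (hK : padic_cdvf p abs)
  (U : (Z -> K) -> Prop) :
  lc_open abs (nice_open_lattice abs) U <-> lc_open abs (indlim_open_lattice abs) U.
Proof.
  destruct hK as [ha [_ [[pi [hpi _]] _]]].
  have eqv : forall L, nice_open_lattice abs L <-> indlim_open_lattice abs L.
  { intro L. split. apply nice_to_indlim; auto. apply (indlim_to_nice ha hpi). }
  split; intros [h1 h2]; split; auto; intros x hx; destruct (h2 x hx) as [L [hL hy]];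
    exists L; split; auto; apply eqv; auto.
Qed.
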